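(* Let $B$, $C$ be unital $\mathrm{C}^*$-algebras, let $\{\phi_i\}_{i=1}^m$, $\{\psi_j\}_{j=1}^n$ be families of surjective $*$-homomorphisms $B\to C$ with $m\ge n$, and let $[c_{ij}]\in M_{m,n}(C)$ satisfy $\phi_i(b)c_{ij}=c_{ij}\psi_j(b)$ for all $b\in B$, $1\le i\le m$, $1\le j\le n$. If $[c_{ij}]$ is right invertible and $C$ has trivial center, then $m=n$ and there exist invertible matrices $E,F\in M_n(C)$ such that $E[c_{ij}]F$ is a diagonal matrix with invertible diagonal entries.
   Context: A matrix $[c_{ij}]\in M_{m,n}(C)$ is right invertible if there is $[d_{ij}]\in M_{n,m}(C)$ with $[c_{ij}][d_{ij}]=I_m$. *)

(* Defs.v *)
From HB Require Import structures.
From mathcomp Require Import all_boot all_order all_algebra.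
From mathcomp Require Import complex.
From mathcomp Require Import reals.
Set Implicit Arguments. Unset Strict Implicit. Unset Printing Implicit Defensive.
Import Order.TTheory GRing.Theory Num.Theory.
Local Open Scope ring_scope.
Local Close Scope term_scope.

(* The complex field over a real field R (R : realType, so R[i] = C). *)
Notation cplx R := (complex (R : rcfType)).

Definition is_unital_cstar (R : realType) (A : algType (cplx R))
    (nrm : A -> R) (st : A -> A) : Prop :=
  (forall x, 0 <= nrm x) /\
  (forall x, nrm x = 0 -> x = 0) /\
  (forall x y, nrm (x + y) <= nrm x + nrm y) /\
  (forall (a : cplx R) x, nrm (a *: x) = ComplexField.Normc.normc a * nrm x) /\
  (forall x y, nrm (x * y) <= nrm x * nrm y) /\
  (forall u : nat -> A,
      (forall e : R, 0 < e -> exists N, forall p q, (N <= p)%N -> (N <= q)%N ->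
          nrm (u p - u q) < e) ->
      exists l, forall e : R, 0 < e -> exists N, forall p, (N <= p)%N ->
          nrm (u p - l) < e) /\
  (forall x y, st (x + y) = st x + st y) /\
  (forall (a : cplx R) x, st (a *: x) = conjc a *: st x) /\
  (forall x y, st (x * y) = st y * st x) /\
  (forall x, st (st x) = x) /\
  (forall x, nrm (st x * x) = nrm x ^+ 2).
(* Unitality (1 <> 0) is built into algType. *)

Definition is_star_hom (R : realType) (A B : algType (cplx R))
    (stA : A -> A) (stB : B -> B) (f : A -> B) : Prop :=
  [/\ (forall x y, f (x + y) = f x + f y),
      (forall (a : cplx R) x, f (a *: x) = a *: f x),
      (forall x y, f (x * y) = f x * f y) &
      (forall x, f (stA x) = stB (f x))].

Definition invertible_el (A : ringType) (x : A) : Prop :=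
  exists y, x * y = 1 /\ y * x = 1.

Definition invertible_mx (A : ringType) (n : nat) (M : 'M[A]_n) : Prop :=
  exists N : 'M[A]_n, M *m N = 1%:M /\ N *m M = 1%:M.

Definition right_invertible_mx (A : ringType) (m n : nat) (M : 'M[A]_(m, n)) : Prop :=
  exists D : 'M[A]_(n, m), M *m D = 1%:M.

Definition trivial_center (R : realType) (A : algType (cplx R)) : Prop :=
  forall z : A, (forall x : A, z * x = x * z) -> exists a : cplx R, z = a%:A.

(* Main.v *)
Require Import Defs.
From HB Require Import structures.
From mathcomp Require Import all_boot all_order all_algebra.
From mathcomp Require Import complex.
From mathcomp Require Import reals.
From mathcomp Require Import fingroup perm.
Import Order.TTheory GRing.Theory Num.Theory.
Local Open Scope ring_scope.
Local Close Scope term_scope.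

Section S.
Variables (R : realType) (B C : algType (cplx R))
    (nB : B -> R) (sB : B -> B) (nC : C -> R) (sC : C -> C).
Hypothesis HB : is_unital_cstar nB sB.
Hypothesis HC : is_unital_cstar nC sC.
Hypothesis Htc : trivial_center C.

Definition Int (f g : B -> C) (x : C) := forall b, f b * x = x * g b.
Definition good (f : B -> C) :=
  (forall x, f (sB x) = sC (f x)) /\ (forall y, exists b, f b = y).

Lemma IntB f g x y : Int f g x -> Int f g y -> Int f g (x - y).
Proof. by move=> Hx Hy b; rewrite mulrBr mulrBl Hx Hy. Qed.
Lemma IntM f g h x y : Int f g x -> Int g h y -> Int f h (x * y).
Proof. by move=> Hx Hy b; rewrite mulrA Hx -mulrA Hy mulrA. Qed.
Lemma IntV f g x y : Int f g x -> x * y = 1 -> y * x = 1 -> Int g f y.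
Proof.
move=> Hx h1 h2 b.
by rewrite -[g b * y]mul1r -h2 -mulrA (mulrA x) -Hx -!mulrA h1 mulr1.
Qed.

Lemma nC0 : nC 0 = 0.
Proof.
case: HC => _ [_ [_ [hs _]]].
by rewrite -(scale0r (0 : C)) hs ComplexField.Normc.normc0 mul0r.
Qed.

Lemma sC0 : sC 0 = 0.
Proof.
case: HC => _ [_ [_ [_ [_ [_ [hadd _]]]]]].
by have := hadd 0 0; rewrite addr0 => /(congr1 (fun z => z - sC 0)); rewrite subrr addrK.
Qed.

Lemma dich f g x : good f -> good g -> Int f g x -> x = 0 \/ invertible_el x.
Proof.
case: HB => _ [_ [_ [_ [_ [_ [_ [_ [_ [sBK _]]]]]]]]].
case: HC => _ [n0 [_ [_ [_ [_ [_ [_ [sM [sCK cst]]]]]]]]].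
move=> [fs fsur] [gs gsur] Hx.
have Hs : forall b, sC x * f b = g b * sC x.
  move=> b; have := Hx (sB b); move/(congr1 sC); rewrite !sM fs gs !sCK.
  by move=> ->.
have [a Ha] : exists a : cplx R, sC x * x = a%:A.
  apply: Htc => z; have [b <-] := gsur z.
  by rewrite -mulrA -Hx mulrA Hs -mulrA.
have [a' Ha'] : exists a : cplx R, x * sC x = a%:A.
  apply: Htc => z; have [b <-] := fsur z.
  by rewrite -mulrA Hs mulrA -Hx -mulrA.
have [a0|a0] := eqVneq a 0.
  left; apply: n0; move: Ha; rewrite a0 scale0r => /(congr1 nC).
  by rewrite cst nC0 => /eqP; rewrite sqrf_eq0 => /eqP.
have [a0'|a0'] := eqVneq a' 0.
  left; move: Ha'; rewrite a0' scale0r => /(congr1 nC).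
  rewrite -{1}(sCK x) cst nC0 => /eqP; rewrite sqrf_eq0 => /eqP /n0 h.
  by rewrite -(sCK x) h sC0.
right; exists (a'^-1 *: sC x); split.
  by rewrite -scalerCA -scalerAl Ha' scalerA mulVf // scale1r.
have e : (a^-1 *: sC x) * x = 1 by rewrite -scalerAl Ha scalerA mulVf // scale1r.
have e' : x * (a'^-1 *: sC x) = 1 by rewrite -scalerCA -scalerAl Ha' scalerA mulVf // scale1r.
have -> : a'^-1 *: sC x = a^-1 *: sC x.
  by rewrite -[a'^-1 *: sC x]mul1r -e -mulrA e' mulr1.
exact: e.
Qed.

Definition Pn (n : nat) := forall m (phi : 'I_m -> B -> C) (psi : 'I_n -> B -> C)
  (c : 'M[C]_(m,n)),
  (forall i, good (phi i)) -> (forall j, good (psi j)) -> (n <= m)%N ->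
  (forall i j, Int (phi i) (psi j) (c i j)) -> right_invertible_mx c ->
  m = n /\ exists G : 'M[C]_(n,m), G *m c = 1%:M.

Lemma upK p q (x : 'M[C]_(p,q)) :
  block_mx 1%:M x 0 1%:M *m block_mx 1%:M (-x) 0 1%:M = 1%:M :> 'M_(p+q).
Proof.
rewrite mulmx_block !mulmx0 !mul0mx !mulmx1 !mul1mx !addr0 !add0r addrC subrr.
by rewrite -scalar_mx_block.
Qed.

Lemma loK p q (x : 'M[C]_(q,p)) :
  block_mx 1%:M 0 x 1%:M *m block_mx 1%:M 0 (-x) 1%:M = 1%:M :> 'M_(p+q).
Proof.
rewrite mulmx_block !mulmx0 !mul0mx !mulmx1 !mul1mx !addr0 !add0r subrr.
by rewrite -scalar_mx_block.
Qed.

Lemma step0 m n : Pn n -> forall (phi : 'I_(1+m) -> B -> C)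
  (psi : 'I_(1+n) -> B -> C) (c : 'M[C]_(1+m,1+n)),
  (forall i, good (phi i)) -> (forall j, good (psi j)) -> (n <= m)%N ->
  (forall i j, Int (phi i) (psi j) (c i j)) -> right_invertible_mx c ->
  invertible_el (c (lshift m ord0) (lshift n ord0)) ->
  1 + m = 1 + n /\ exists G : 'M[C]_(1+n,1+m), G *m c = 1%:M.
Proof.
move=> IH phi psi c gphi gpsi nm Hc [D cD] [y [hy1 hy2]].
set a := ulsubmx c. set r := ursubmx c. set l := dlsubmx c. set M := drsubmx c.
have ea : a = (c (lshift m ord0) (lshift n ord0))%:M by rewrite /a {1}[ulsubmx c]mx11_scalar !mxE.
pose ai : 'M[C]_1 := y%:M.
have aia : ai *m a = 1%:M by rewrite ea -scalar_mxM hy2.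
have aai : a *m ai = 1%:M by rewrite ea -scalar_mxM hy1.
pose S := M - l *m ai *m r.
pose L' : 'M[C]_(1+m) := block_mx 1%:M 0 (l *m ai) 1%:M.
pose Li : 'M[C]_(1+m) := block_mx 1%:M 0 (-(l *m ai)) 1%:M.
pose U' : 'M[C]_(1+n) := block_mx 1%:M (ai *m r) 0 1%:M.
pose Ui : 'M[C]_(1+n) := block_mx 1%:M (-(ai *m r)) 0 1%:M.
pose blk : 'M[C]_(1+m,1+n) := block_mx a 0 0 S.
have LiL : Li *m L' = 1%:M by rewrite /Li /L' -{2}(opprK (l *m ai)) loK.
have UUi : U' *m Ui = 1%:M by rewrite /Ui /U' upK.
have UiU : Ui *m U' = 1%:M by rewrite /Ui /U' -{2}(opprK (ai *m r)) upK.
have fac : c = L' *m blk *m U'.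
  rewrite /L' /blk /U' !mulmx_block !mul1mx !mulmx1 !mul0mx !mulmx0 !addr0 !add0r.
  rewrite -mulmxA aia mulmx1 !mulmxA aai mul1mx /S addrC subrK.
  by rewrite -{1}[c]submxK.
have blkE : blk = Li *m c *m Ui.
  by rewrite fac !mulmxA LiL mul1mx -mulmxA UUi mulmx1.
have Sri : right_invertible_mx S.
  pose X := U' *m D *m L'.
  have : blk *m X = 1%:M.
    rewrite blkE /X !mulmxA -(mulmxA (Li *m c)) UiU mulmx1 -(mulmxA Li) cD.
    by rewrite mulmx1 LiL.
  rewrite -[X]submxK /blk mulmx_block !mul0mx !add0r !addr0 scalar_mx_block.
  by case/eq_block_mx => _ _ _ h; exists (drsubmx X).
have HS : forall i j, Int (phi (rshift 1 i)) (psi (rshift 1 j)) (S i j).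
  move=> i j.
  have -> : S i j = c (rshift 1 i) (rshift 1 j) -
     c (rshift 1 i) (lshift n ord0) * y * c (lshift m ord0) (rshift 1 j).
    by rewrite /S !mxE big_ord1 !mxE big_ord1 !mxE eqxx mulr1n.
  apply: IntB; first exact: Hc.
  apply: IntM; last exact: Hc.
  apply: IntM; first exact: Hc.
  exact: IntV (Hc _ _) hy1 hy2.
have [emn [T hT]] := IH m (fun i => phi (rshift 1 i)) (fun j => psi (rshift 1 j)) S
  (fun i => gphi _) (fun j => gpsi _) nm HS Sri.
split; first by rewrite emn.
exists (Ui *m block_mx ai 0 0 T *m Li).
have bb : block_mx ai 0 0 T *m blk = 1%:M.
  by rewrite /blk mulmx_block !mulmx0 !mul0mx !addr0 !add0r aia hT -scalar_mx_block.
rewrite fac !mulmxA -(mulmxA _ Li) LiL mulmx1 -(mulmxA Ui) bb mulmx1.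
exact: UiU.
Qed.

Lemma main_ind n : Pn n.
Proof.
elim: n => [|n IH] m phi psi c gphi gpsi nm Hc [D cD].
  case: m phi c Hc D cD nm gphi => [|m] phi c Hc D cD _ gphi.
    by split=> //; exists 0; apply/matrixP => i; case: i.
  exfalso; have := congr1 (fun A : 'M[C]_(m.+1) => A ord0 ord0) cD.
  by rewrite !mxE big_ord0 eqxx mulr1n => /eqP; rewrite eq_sym oner_eq0.
case: m phi c Hc D cD nm gphi => [|m] phi c Hc D cD nm gphi //.
have [j cj] : exists j, c ord0 j != 0.
  case: (pickP (fun j => c ord0 j != 0)) => [j hj|h]; first by exists j.
  exfalso.
  have hs : \sum_k c ord0 k * D k ord0 = 0.
    by apply: big1 => k _; move/negbFE: (h k) => /eqP ->; rewrite mul0r.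
  have := congr1 (fun A : 'M[C]_(m.+1) => A ord0 ord0) cD.
  by rewrite !mxE hs eqxx mulr1n => /eqP; rewrite eq_sym oner_eq0.
have inv : invertible_el (c ord0 j).
  by case: (@dich _ _ _ (gphi ord0) (gpsi j) (Hc _ _)) => // h; rewrite h eqxx in cj.
pose P : 'M[C]_(n.+1) := tperm_mx (ord0 : 'I_n.+1) j.
pose c' := c *m P.
have PP : P *m P = 1%:M by rewrite /P /tperm_mx -perm_mxM tperm2 perm_mx1.
have c'E : forall i k, c' i k = c i (tperm ord0 j k).
  by move=> i k; rewrite /c' -xcolE mxE.
have := @step0 m n IH phi (fun k => psi (tperm ord0 j k)) c' gphi
  (fun k => gpsi _) nm.
case.
- by move=> i k; rewrite c'E; exact: Hc.
- by exists (P *m D); rewrite /c' mulmxA -(mulmxA c) PP mulmx1.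
- rewrite c'E.
  have -> : lshift m (ord0 : 'I_1) = ord0 :> 'I_m.+1 by apply: val_inj.
  have -> : lshift n (ord0 : 'I_1) = ord0 :> 'I_n.+1 by apply: val_inj.
  by rewrite tpermL.
move=> emn [G hG]; split; first exact: emn.
exists (P *m G).
have hGc : G *m c = P.
  by rewrite -[G *m c]mulmx1 -PP mulmxA -(mulmxA G) hG mul1mx.
by rewrite -mulmxA hGc PP.
Qed.

End S.

Theorem lemma3p3 (R : realType) (B C : algType (cplx R))
    (nB : B -> R) (sB : B -> B) (nC : C -> R) (sC : C -> C)
    (m n : nat) (phi : 'I_m -> B -> C) (psi : 'I_n -> B -> C)
    (c : 'M[C]_(m, n)) :
  is_unital_cstar nB sB -> is_unital_cstar nC sC ->
  (forall i, is_star_hom sB sC (phi i) /\ forall y : C, exists b, phi i b = y) ->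
  (forall j, is_star_hom sB sC (psi j) /\ forall y : C, exists b, psi j b = y) ->
  (n <= m)%N ->
  (forall (b : B) i j, phi i b * c i j = c i j * psi j b) ->
  right_invertible_mx c ->
  trivial_center C ->
  m = n /\
  exists (e : m = n) (E F : 'M[C]_n),
    [/\ invertible_mx E, invertible_mx F &
        let D := E *m castmx (e, erefl n) c *m F in
        (forall i j, i != j -> D i j = 0) /\ (forall i, invertible_el (D i i))].
Proof.
move=> HB HC Hphi Hpsi nm Hc Hri Htc.
have gphi : forall i, @good R B C sB sC (phi i).
  by move=> i; case: (Hphi i) => [[_ _ _ h] s]; split.
have gpsi : forall j, @good R B C sB sC (psi j).
  by move=> j; case: (Hpsi j) => [[_ _ _ h] s]; split.
have [emn [G hG]] := @main_ind R B C nB sB nC sC HB HC Htc n m phi psi c gphi gpsi nm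
  (fun i j b => Hc b i j) Hri.
subst m.
case: Hri => D cD.
have DG : G = D by rewrite -[G]mulmx1 -cD mulmxA hG mul1mx.
subst G.
split; first by [].
exists erefl, 1%:M, D; split.
- by exists 1%:M; rewrite mul1mx.
- by exists c; split.
- rewrite castmx_id mul1mx cD; split.
    by move=> i j ij; rewrite mxE (negbTE ij).
  by move=> i; exists 1; rewrite mxE eqxx mulr1n mul1r.
Qed.
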